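(* Let $k\ge 4$ be even and $n$ odd with $2k\le n$ and $n\equiv\pm 2\pmod{k-1}$. Then $$\chi_c(\mathrm{Pet}(n,k))\ \le\ \frac{2n(k-1)}{(n-4)(k-2)}.$$
   Context: For integers $n,k$ with $2<2k\le n$, the generalized Petersen graph $\mathrm{Pet}(n,k)$ has vertex set $\{u_0,\dots,u_{n-1}\}\cup\{v_0,\dots,v_{n-1}\}$ and edge set $\{u_iu_{i+1}\}\cup\{u_iv_i\}\cup\{v_iv_{i+k}\}$, indices modulo $n$. For integers $p\ge 2q\ge 2$, the circular complete graph $K_{p/q}$ has vertex set $\{0,\dots,p-1\}$ with $i\sim j$ iff $q\le|i-j|\le p-q$; the circular chromatic number $\chi_c(G)$ is the minimum of $p/q$ over all such $p,q$ for which $G$ admits a homomorphism to $K_{p/q}$. *)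

(* Defs.v *)
From mathcomp Require Import all_boot.

(* Vertices of Pet(n,k): (false, i) is u_i, (true, i) is v_i, i : 'I_n. *)
Definition pet_vertex (n : nat) : finType := (bool * 'I_n)%type.

Definition pet_arc (n k : nat) (x y : pet_vertex n) : bool :=
  match x, y with
  | (false, i), (false, j) => j == (i + 1) %% n :> nat
  | (false, i), (true, j) => i == j
  | (true, i), (true, j) => j == (i + k) %% n :> nat
  | _, _ => false
  end.

Definition pet_adj (n k : nat) : rel (pet_vertex n) :=
  fun x y => pet_arc n k x y || pet_arc n k y x.

Definition circ_adj (p q : nat) (i j : 'I_p) : bool :=
  let d := maxn i j - minn i j in (q <= d) && (d <= p - q).

Definition hom_to_circ {T : finType} (adj : rel T) (p q : nat) : Prop :=
  exists f : T -> 'I_p, forall x y, adj x y -> circ_adj p q (f x) (f y).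

(* Main.v *)
Require Import Defs.
From mathcomp Require Import all_boot zify.

Lemma circ_sym p q a b : circ_adj p q a b = circ_adj p q b a.
Proof. by rewrite /circ_adj maxnC minnC. Qed.

Lemma key n q (x y c : nat) (Hn : 0 < n) :
  q <= c %% n <= n - q -> y = x + c %[mod n] ->
  circ_adj n q (Ordinal (ltn_pmod x Hn)) (Ordinal (ltn_pmod y Hn)).
Proof.
move=> /andP[H1 H2] Hy; rewrite /circ_adj /= Hy -modnDm.
have Ha := ltn_pmod x Hn; have Hc := ltn_pmod c Hn.
move: H1 H2 Ha Hc; set a := x %% n; set c' := c %% n => H1 H2 Ha Hc.
case: (ltnP (a + c') n) => Hlt.
  rewrite modn_small //; apply/andP; split; lia.
have -> : a + c' = (a + c' - n) + n by lia.
rewrite modnDr modn_small; last lia.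
apply/andP; split; lia.
Qed.

Lemma hom_rot n k q m t (Hn : 0 < n) :
  q <= m %% n <= n - q -> q <= t %% n <= n - q -> q <= (k * m) %% n <= n - q ->
  hom_to_circ (pet_adj n k) n q.
Proof.
move=> Hm Ht Hk.
pose f (x : pet_vertex n) : 'I_n :=
  match x with (false, i) => Ordinal (ltn_pmod (i * m) Hn)
             | (true, i) => Ordinal (ltn_pmod (i * m + t) Hn) end.
exists f.
have A : forall (b1 b2 : pet_vertex n), pet_arc n k b1 b2 -> circ_adj n q (f b1) (f b2).
  move=> [[] i] [[] j] /=; rewrite /pet_arc //.
  - move=> /eqP Hj; apply: key Hk _.
    by rewrite Hj -modnDml modnMml modnDml mulnDl addnAC.
  - move=> /eqP Hj; apply: key Ht _; by rewrite Hj.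
  - move=> /eqP Hj; apply: key Hm _.
    by rewrite Hj modnMml mulnDl mul1n.
move=> x y; rewrite /pet_adj => /orP[/A //|/A]; by rewrite circ_sym.
Qed.
Lemma c1 g j : 1 <= j ->
  let n := 2 + j * (2 * g + 3) in let m := 1 + j * (g + 1) in
  [/\ 2 * m + 1 <= n, (2 * g + 4) * m = (m + 1) + (g + 1) * n &
      (n - 4) * (2 * g + 2) <= 2 * (2 * g + 3) * m].
Proof. move=> Hj n m; subst n m; split; nia. Qed.
Lemma c2 g j : 3 <= j ->
  let n := j * (2 * g + 3) - 2 in let m := j * (g + 1) - 1 in
  [/\ 3 <= j * (g + 1), (2 * g + 4) * m = (m - 1) + (g + 1) * n &
      (n - 4) * (2 * g + 2) <= 2 * (2 * g + 3) * (m - 1)].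
Proof. move=> Hj n m; subst n m; split; nia. Qed.

Theorem corollary6 (n k : nat) :
  4 <= k -> ~~ odd k -> odd n -> 2 * k <= n ->
  (n = 2 %[mod k.-1] \/ n + 2 = 0 %[mod k.-1]) ->
  exists p q : nat,
    [/\ 1 <= q, 2 * q <= p,
        p * ((n - 4) * (k - 2)) <= 2 * n * (k - 1) * q &
        hom_to_circ (pet_adj n k) p q].
Proof.
move=> Hk4 Hev _ Hkn Hmod; move: Hmod.
have Hkh : k = (k./2).*2 by rewrite -[LHS]odd_double_half (negbTE Hev).
have [g Hg] : exists g, k = 2 * g + 4 by exists (k./2 - 2); move: Hkh Hk4; rewrite -muln2; clear; lia.
clear Hkh Hev.
have Hn : 0 < n by lia.
have Ht : forall q, 2 * q <= n -> q <= n./2 %% n <= n - q.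
  move=> q Hq; rewrite modn_small; last by rewrite -divn2; lia.
  by rewrite -divn2; apply/andP; split; lia.
have Hk1 : k.-1 = 2 * g + 3 by lia.
rewrite Hk1; clear Hk1; case=> Hmod.
- rewrite (modn_small (m := 2)) in Hmod; last by lia.
  have Hnj : n = 2 + (n %/ (2 * g + 3)) * (2 * g + 3).
    by rewrite {1}(divn_eq n (2 * g + 3)) Hmod addnC.
  move: Hnj; move: (n %/ (2 * g + 3)) => j Hnj; clear Hmod.
  have Hj : 1 <= j.
    case: j Hnj => [|//]; lia.
  have [A B C] := c1 g j Hj.
  have E : j * (2 * g + 3) = 2 * (j * (g + 1)) + j by lia.
  rewrite -Hnj in A B C.
  have Hm1 : 1 <= 1 + j * (g + 1) by [].
  move: (1 + j * (g + 1)) Hm1 A B C => m Hm1 A B C.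
  exists n, m; split.
  + lia.
  + lia.
  + have C' : (n - 4) * (k - 2) <= 2 * (k - 1) * m.
      have -> : k - 2 = 2 * g + 2 by lia. have -> : k - 1 = 2 * g + 3 by lia. exact: C.
    apply: leq_trans (leq_mul (leqnn n) C') _. by rewrite !mulnA (mulnC n 2).
  + apply: (hom_rot _ _ _ m (n./2) Hn).
    * rewrite modn_small; last lia. apply/andP; split; lia.
    * apply: Ht; lia.
    * rewrite Hg B addnC modnMDl modn_small; last lia. apply/andP; split; lia.
- rewrite mod0n in Hmod.
  have Hnj : n + 2 = ((n + 2) %/ (2 * g + 3)) * (2 * g + 3).
    by rewrite {1}(divn_eq (n + 2) (2 * g + 3)) Hmod addn0.
  move: Hnj; move: ((n + 2) %/ (2 * g + 3)) => j Hnj; clear Hmod.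
  have Hj : 3 <= j.
    case: j Hnj => [|[|[|//]]]; lia.
  have [A B C] := c2 g j Hj.
  have Hn2 : j * (2 * g + 3) - 2 = n by lia.
  have E : j * (2 * g + 3) = 2 * (j * (g + 1)) + j by lia.
  rewrite Hn2 in B C.
  have Hm1 : 2 <= j * (g + 1) - 1 by lia.
  have Hmn : 2 * (j * (g + 1) - 1) <= n + 1 by lia.
  move: (j * (g + 1) - 1) Hm1 Hmn A B C => m Hm1 Hmn A B C.
  exists n, (m - 1); split.
  + lia.
  + lia.
  + have C' : (n - 4) * (k - 2) <= 2 * (k - 1) * (m - 1).
      have -> : k - 2 = 2 * g + 2 by lia. have -> : k - 1 = 2 * g + 3 by lia. exact: C.
    apply: leq_trans (leq_mul (leqnn n) C') _. by rewrite !mulnA (mulnC n 2).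
  + apply: (hom_rot _ _ _ m (n./2) Hn).
    * rewrite modn_small; last lia. apply/andP; split; lia.
    * apply: Ht; lia.
    * rewrite Hg B addnC modnMDl modn_small; last lia. apply/andP; split; lia.
Qed.
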